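(* Let $R$ be a ring and $T$ a $2$-tilting right $R$-module of projective dimension exactly $2$. Then $\operatorname{Gen}T\not\subseteq T^{\perp}$, and hence $T$ is not $\tau$-rigid.
   Context: A right $R$-module $T$ is $n$-tilting if $\operatorname{pd}T\le n$, $\operatorname{Ext}^i_R(T,T^{(\lambda)})=0$ for all $i>0$ and all cardinals $\lambda$, and there is an exact sequence $0\to R\to T_0\to\cdots\to T_n\to 0$ with each $T_i$ a direct summand of a direct sum of copies of $T$. $\operatorname{Gen}T$ is the class of epimorphic images of direct sums of copies of $T$; $T^{\perp}=\{M:\operatorname{Ext}^1_R(T,M)=0\}$. $T$ is $\tau$-rigid if there exists a projective presentation $P_1\xrightarrow{\varphi}P_0\to T\to 0$ such that $\operatorname{Hom}_R(\varphi,M)$ is surjective for every $M\in\operatorname{Gen}T$. *)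

(* Defs.v *)
(* Right R-modules are modelled as left modules over the
   converse ring R^c (an [lmodType R^c]); homomorphisms are functions
   satisfying [is_hom].  All homological notions are defined from scratch. *)
From HB Require Import structures.
From mathcomp Require Import all_boot all_order all_algebra.
Set Implicit Arguments. Unset Strict Implicit. Unset Printing Implicit Defensive.
Import GRing.Theory.
Local Open Scope ring_scope.

Section ModuleDefs.
Variable R : nzRingType.

Local Notation rmod := (lmodType R^c).

(* R as a right module over itself: x *: y = y * x in R *)
Definition RR : rmod := (R^c)^o.

Definition is_hom (M N : rmod) (f : M -> N) : Prop :=
  forall (a : R^c) (u v : M), f (a *: u + v) = a *: f u + f v.

Definition surj (M N : rmod) (f : M -> N) : Prop := forall y, exists x, f x = y.

Definition exact_at (M N P : rmod) (f : M -> N) (g : N -> P) : Prop :=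
  forall y, g y = 0 <-> exists x, y = f x.

Definition projective (P : rmod) : Prop :=
  forall (M N : rmod) (g : M -> N) (h : P -> N),
    is_hom g -> is_hom h -> surj g ->
    exists k : P -> M, is_hom k /\ forall x, g (k x) = h x.

(* ... -> P 2 --d 1--> P 1 --d 0--> P 0 --eps--> A -> 0 *)
Definition is_proj_resolution (A : rmod) (P : nat -> rmod)
    (d : forall n, P n.+1 -> P n) (eps : P 0 -> A) : Prop :=
  (forall n, projective (P n)) /\ (forall n, is_hom (d n)) /\ is_hom eps /\
  surj eps /\ exact_at (d 0) eps /\ (forall n, exact_at (d n.+1) (d n)).

(* Ext^{k+1}_R(A,B) = 0, computed from (any, equivalently every) projective
   resolution: every cocycle P_{k+1} -> B is a coboundary. *)
Definition Ext_succ_zero (k : nat) (A B : rmod) : Prop :=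
  forall (P : nat -> rmod) (d : forall n, P n.+1 -> P n) (eps : P 0 -> A),
    @is_proj_resolution A P d eps ->
    forall phi : P k.+1 -> B, is_hom phi -> (forall x, phi (d k.+1 x) = 0) ->
    exists psi : P k -> B, is_hom psi /\ forall x, phi x = psi (d k x).

Definition Ext_zero (i : nat) (A B : rmod) : Prop :=
  match i with
  | 0 => forall f : A -> B, is_hom f -> forall x, f x = 0
  | k.+1 => Ext_succ_zero k A B
  end.

Definition pd_le (A : rmod) (n : nat) : Prop :=
  exists (P : nat -> rmod) (d : forall n, P n.+1 -> P n) (eps : P 0 -> A),
    @is_proj_resolution A P d eps /\ forall m, (n < m)%N -> forall x : P m, x = 0.

Definition is_coprod_copies (T : rmod) (I : Type) (S : rmod) (inj : I -> T -> S) : Prop :=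
  (forall i, is_hom (inj i)) /\
  forall (N : rmod) (f : I -> T -> N), (forall i, is_hom (f i)) ->
    exists g : S -> N, [/\ is_hom g, (forall i x, g (inj i x) = f i x) &
      forall g' : S -> N, is_hom g' -> (forall i x, g' (inj i x) = f i x) ->
        forall y, g' y = g y].

Definition Add (T X : rmod) : Prop :=
  exists (I : Type) (S : rmod) (inj : I -> T -> S), @is_coprod_copies T I S inj /\
    exists (e : X -> S) (p : S -> X), [/\ is_hom e, is_hom p & forall x, p (e x) = x].

Definition Gen (T M : rmod) : Prop :=
  exists (I : Type) (S : rmod) (inj : I -> T -> S), @is_coprod_copies T I S inj /\
    exists p : S -> M, is_hom p /\ surj p.

(* image of the incoming map of 0 -> RR --iota--> Tm 0 --e 0--> Tm 1 --> ... *)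
Definition in_im (Tm : nat -> rmod) (iota : RR -> Tm 0)
    (e : forall k, Tm k -> Tm k.+1) (k : nat) : Tm k -> Prop :=
  match k return Tm k -> Prop with
  | 0 => fun y => exists r, y = iota r
  | k'.+1 => fun y => exists x, y = e k' x
  end.

Definition tilting (n : nat) (T : rmod) : Prop :=
  [/\ pd_le T n,
      (forall i, (0 < i)%N -> forall (I : Type) (S : rmod) (inj : I -> T -> S),
         @is_coprod_copies T I S inj -> Ext_zero i T S) &
      exists (Tm : nat -> rmod) (iota : RR -> Tm 0) (e : forall k, Tm k -> Tm k.+1),
        is_hom iota /\ injective iota /\ (forall k, is_hom (e k)) /\
        (forall k, (k <= n)%N -> Add T (Tm k)) /\
        (forall k, (k < n)%N -> forall y, e k y = 0 <-> in_im iota e y) /\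
        (forall y : Tm n, in_im iota e y)].

Definition in_perp (T M : rmod) : Prop := Ext_zero 1 T M.

Definition tau_rigid (T : rmod) : Prop :=
  exists (P1 P0 : rmod) (phi : P1 -> P0) (pi : P0 -> T),
    projective P1 /\ projective P0 /\ is_hom phi /\ is_hom pi /\ surj pi /\
    exact_at phi pi /\
    (forall M, Gen T M -> forall f : P1 -> M, is_hom f ->
       exists g : P0 -> M, is_hom g /\ forall x, f x = g (phi x)).

End ModuleDefs.

(* Main.v *)
Require Import Defs.
From HB Require Import structures.
From mathcomp Require Import all_boot all_order all_algebra.
From mathcomp Require Import finmap.
From mathcomp.multinomials Require Import monalg.
From Stdlib Require Import ClassicalEpsilon.
Set Implicit Arguments. Unset Strict Implicit. Unset Printing Implicit Defensive.
Import GRing.Theory.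
Local Open Scope ring_scope.

Section Basics.
Variable R : nzRingType.
Local Notation rmod := (lmodType R^c).

Lemma hom0 (M N : rmod) (f : M -> N) : is_hom f -> f 0 = 0.
Proof.
move=> hf; have h := hf 1 0 0; rewrite !scale1r !addr0 in h.
by apply: (addrI (f 0)); rewrite addr0 -h.
Qed.

Lemma homD (M N : rmod) (f : M -> N) : is_hom f -> forall u v, f (u + v) = f u + f v.
Proof. by move=> hf u v; have := hf 1 u v; rewrite !scale1r. Qed.

Lemma homZ (M N : rmod) (f : M -> N) : is_hom f -> forall a u, f (a *: u) = a *: f u.
Proof. by move=> hf a u; have := hf a u 0; rewrite addr0 (hom0 hf) addr0. Qed.

Lemma homN (M N : rmod) (f : M -> N) : is_hom f -> forall u, f (- u) = - f u.
Proof.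
move=> hf u; apply/eqP; rewrite -subr_eq0 opprK -(homD hf) addNr (hom0 hf) //.
Qed.

Lemma homB (M N : rmod) (f : M -> N) : is_hom f -> forall u v, f (u - v) = f u - f v.
Proof. by move=> hf u v; rewrite (homD hf) (homN hf). Qed.

Lemma hom_sum (M N : rmod) (f : M -> N) (I : Type) (s : seq I) (F : I -> M) :
  is_hom f -> f (\sum_(i <- s) F i) = \sum_(i <- s) f (F i).
Proof.
move=> hf; elim: s => [|a s IH]; first by rewrite !big_nil (hom0 hf).
by rewrite !big_cons (homD hf) IH.
Qed.

Lemma is_homP (M N : rmod) (f : M -> N) :
  (forall u v, f (u + v) = f u + f v) -> (forall a u, f (a *: u) = a *: f u) -> is_hom f.
Proof. by move=> hD hZ a u v; rewrite hD hZ. Qed.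

Lemma hom_comp (M N P : rmod) (f : M -> N) (g : N -> P) :
  is_hom f -> is_hom g -> is_hom (fun x => g (f x)).
Proof. by move=> hf hg a u v; rewrite hf hg. Qed.

Lemma hom_id (M : rmod) : is_hom (fun x : M => x).
Proof. by []. Qed.

Section Ker.
Variables (M N : rmod) (f : M -> N).
Hypothesis hf : is_hom f.
Definition kerP := [pred x : M | f x == 0].
Lemma kerP_closed : subsemimod_closed kerP.
Proof.
split; first split.
- by rewrite inE (hom0 hf).
- by move=> u v; rewrite !inE (homD hf) => /eqP-> /eqP->; rewrite addr0.
- by move=> a u; rewrite !inE (homZ hf) => /eqP->; rewrite scaler0.
Qed.
HB.instance Definition _ := GRing.isSubmodClosed.Build R^c M kerP kerP_closed.
Record kerT := KerT { kval : M; kvalP : kval \in kerP }.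
HB.instance Definition _ := [isSub for kval].
HB.instance Definition _ := [Choice of kerT by <:].
HB.instance Definition _ := [SubChoice_isSubLmodule of kerT by <:].

Lemma kval_hom : is_hom (kval : kerT -> M).
Proof. move=> a u v; rewrite -[kval]/(val : kerT -> M) raddfD; congr (_ + _). Qed.
Definition KerM : rmod := kerT.
End Ker.

Section DSum.
Variable K : choiceType.

Definition dsum (M : rmod) := malg K M.
HB.instance Definition _ (M : rmod) := GRing.Zmodule.on (dsum M).
Definition dscale (M : rmod) (c : R^c) (g : dsum M) : dsum M :=
  [malg k in msupp g => c *: g@_k].
Lemma dscaleE (M : rmod) c (g : dsum M) k : (dscale c g)@_k = c *: g@_k.
Proof. rewrite mcoeffE; case: msuppP => //; by rewrite scaler0. Qed.
Lemma dscaleA (M : rmod) c1 c2 (g : dsum M) : dscale c1 (dscale c2 g) = dscale (c1 * c2) g.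
Proof. by apply/malgP=> x; rewrite !dscaleE scalerA. Qed.
Lemma dscale1r (M : rmod) (g : dsum M) : dscale 1 g = g.
Proof. by apply/malgP=> k; rewrite !dscaleE scale1r. Qed.
Lemma dscaleDr (M : rmod) c (g1 g2 : dsum M) : dscale c (g1 + g2) = dscale c g1 + dscale c g2.
Proof. by apply/malgP=> k; rewrite !(mcoeffD, dscaleE) scalerDr. Qed.
Lemma dscaleDl (M : rmod) (g : dsum M) c1 c2: dscale (c1 + c2) g = dscale c1 g + dscale c2 g.
Proof. by apply/malgP=> x; rewrite !(mcoeffD, dscaleE) scalerDl. Qed.
HB.instance Definition _ (M : rmod) := GRing.Zmodule_isLmodule.Build R^c (dsum M)
  (@dscaleA M) (@dscale1r M) (@dscaleDr M) (@dscaleDl M).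

Lemma dsumZ (M : rmod) c (g : dsum M) k : (c *: g)@_k = c *: g@_k.
Proof. exact: dscaleE. Qed.
Lemma dsumD (M : rmod) (g h : dsum M) k : (g + h)@_k = g@_k + h@_k.
Proof. exact: mcoeffD. Qed.
Lemma dsum0 (M : rmod) k : (0 : dsum M)@_k = 0.
Proof. exact: mcoeff0. Qed.

Definition Dmap (M N : rmod) (f : M -> N) (g : dsum M) : dsum N :=
  [malg k in msupp g => f g@_k].
Lemma DmapE (M N : rmod) (f : M -> N) : f 0 = 0 -> forall g k, (Dmap f g)@_k = f g@_k.
Proof. move=> f0 g k; rewrite mcoeffE; case: msuppP => //. Qed.

Lemma Dmap_hom (M N : rmod) (f : M -> N) : is_hom f -> is_hom (Dmap f).
Proof.
move=> hf a u v; apply/malgP => k.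
by rewrite dsumD dsumZ !(DmapE (hom0 hf)) dsumD dsumZ hf.
Qed.

Definition Uk (M : rmod) (k : K) (m : M) : dsum M := << m *g k >>.
Lemma UkE (M : rmod) k (m : M) k' : (Uk k m)@_k' = m *+ (k == k').
Proof. exact: mcoeffU. Qed.
Lemma Uk_hom (M : rmod) k : is_hom (@Uk M k).
Proof.
move=> a u v; apply/malgP => k'.
by rewrite dsumD dsumZ !UkE mulrnDl scalerMnr.
Qed.

Definition Dsum (M N : rmod) (g : K -> M -> N) (x : dsum M) : N :=
  \sum_(k <- msupp x) g k x@_k.

Lemma DsumEw (M N : rmod) (g : K -> M -> N) (x : dsum M) (d : {fset K}) :
  (forall k, g k 0 = 0) -> (msupp x `<=` d)%fset -> Dsum g x = \sum_(k <- d) g k x@_k.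
Proof.
move=> g0 le; apply: big_fset_incl => // k _ kn.
by rewrite mcoeff_outdom.
Qed.

Lemma Dsum_hom (M N : rmod) (g : K -> M -> N) :
  (forall k, is_hom (g k)) -> is_hom (Dsum g).
Proof.
move=> hg a u v.
have g0 k : g k 0 = 0 by apply: hom0.
pose d := (msupp u `|` msupp v `|` msupp (a *: u + v))%fset.
rewrite (@DsumEw _ _ _ _ d) //; last by apply/fsubsetP => k kv; rewrite /d !inE kv ?orbT.
rewrite (@DsumEw _ _ _ u d) //; last by apply/fsubsetP => k kv; rewrite /d !inE kv ?orbT.
rewrite (@DsumEw _ _ _ v d) //; last by apply/fsubsetP => k kv; rewrite /d !inE kv ?orbT.
rewrite scaler_sumr -big_split /=; apply: eq_bigr => k _.
by rewrite dsumD dsumZ hg.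
Qed.

Lemma Dsum_Uk (M N : rmod) (g : K -> M -> N) k m :
  (forall k, g k 0 = 0) -> Dsum g (Uk k m) = g k m.
Proof.
move=> g0; rewrite (@DsumEw _ _ _ _ [fset k]%fset) //; last exact: msuppU_le.
by rewrite big_seq_fset1 /Uk mcoeffUU.
Qed.

Lemma Dsum_uniq (M N : rmod) (g : K -> M -> N) (g' : dsum M -> N) :
  is_hom g' -> (forall k m, g' (Uk k m) = g k m) -> forall x, g' x = Dsum g x.
Proof.
move=> hg' H x; rewrite {1}(monalgE x) (hom_sum _ _ hg').
by apply: eq_bigr => k _; rewrite -H.
Qed.

Lemma Dmap_pre (M N : rmod) (f : M -> N) (y : dsum N) :
  is_hom f -> (forall k, exists n, y@_k = f n) -> exists x, y = Dmap f x.
Proof.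
move=> hf H.
pose x : dsum M := [malg k in msupp y => epsilon (inhabits 0) (fun n => y@_k = f n)].
exists x; apply/malgP => k; rewrite (DmapE (hom0 hf)) /x mcoeffE.
case: msuppP => _; last by rewrite (hom0 hf).
exact: (epsilon_spec (inhabits 0) (fun n => y@_k = f n) (H k)).
Qed.

Lemma Dmap_surj (M N : rmod) (f : M -> N) : is_hom f -> surj f -> surj (Dmap f).
Proof.
move=> hf sf y; have [x ->] := Dmap_pre hf (fun k => let: ex_intro n e := sf y@_k in ex_intro _ n (esym e)).
by exists x.
Qed.

Lemma Dmap_exact (N B C : rmod) (i : N -> B) (q : B -> C) :
  is_hom i -> is_hom q -> (forall y, q y = 0 <-> exists n, y = i n) ->
  forall y, Dmap q y = 0 <-> exists n, y = Dmap i n.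
Proof.
move=> hi hq ex y; split.
- move=> yq; apply: Dmap_pre => // k; apply/ex.
  by rewrite -(DmapE (hom0 hq)) yq dsum0.
- case=> n ->; apply/malgP => k.
  rewrite dsum0 !(DmapE (hom0 hq), DmapE (hom0 hi)).
  by apply/ex; exists n@_k.
Qed.

Lemma Dmap_inj (M N : rmod) (f : M -> N) : is_hom f -> injective f -> injective (Dmap f).
Proof.
move=> hf fi x y e; apply/malgP => k; apply: fi.
by rewrite -!(DmapE (hom0 hf)) e.
Qed.

Lemma Dmap_comp (M N P : rmod) (f : M -> N) (g : N -> P) x :
  is_hom f -> is_hom g -> Dmap g (Dmap f x) = Dmap (fun y => g (f y)) x.
Proof.
move=> hf hg; apply/malgP => k.
by rewrite !(DmapE (hom0 hf), DmapE (hom0 hg), DmapE (hom0 (hom_comp hf hg))).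
Qed.

Lemma Dmap_retr (M N : rmod) (e : M -> N) (p : N -> M) x :
  is_hom e -> is_hom p -> (forall x, p (e x) = x) -> Dmap p (Dmap e x) = x.
Proof.
move=> he hp pe; rewrite Dmap_comp //; apply/malgP => k.
by rewrite (DmapE (hom0 (hom_comp he hp))) pe.
Qed.

Lemma dsum_coprod (T S0 : rmod) (I0 : Type) (inj0 : I0 -> T -> S0) :
  is_coprod_copies inj0 ->
  is_coprod_copies (fun ki : K * I0 => fun t => Uk ki.1 (inj0 ki.2 t)).
Proof.
case=> hinj0 up0; split.
  by case=> k i /=; apply: hom_comp => //; apply: Uk_hom.
move=> N f hf.
have ex k : exists g : S0 -> N, [/\ is_hom g, (forall i x, g (inj0 i x) = f (k, i) x) &
      forall g' : S0 -> N, is_hom g' -> (forall i x, g' (inj0 i x) = f (k, i) x) ->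
        forall y, g' y = g y].
  by apply: up0 => i; apply: hf.
pose gk k := epsilon (inhabits (fun _ : S0 => 0 : N)) (fun g : S0 -> N => [/\ is_hom g, (forall i x, g (inj0 i x) = f (k, i) x) &
      forall g' : S0 -> N, is_hom g' -> (forall i x, g' (inj0 i x) = f (k, i) x) ->
        forall y, g' y = g y]).
have gkP k := epsilon_spec (inhabits (fun _ : S0 => 0 : N)) _ (ex k).
have hgk k : is_hom (gk k) by case: (gkP k).
have gk0 k : gk k 0 = 0 by apply: hom0.
exists (Dsum gk); split.
- exact: Dsum_hom.
- by case=> k i x /=; rewrite Dsum_Uk //; case: (gkP k) => _ H _; apply: H.
- move=> g' hg' H; apply: Dsum_uniq => // k m.
  case: (gkP k) => _ _ U; apply: (U (fun y => g' (Uk k y))).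
    by apply: hom_comp => //; apply: Uk_hom.
  by move=> i x; rewrite (H (k, i)).
Qed.
End DSum.

Definition Zm : rmod := 'rV[R^c]_0.
Lemma Zm0 (x : Zm) : x = 0.
Proof. exact: thinmx0. Qed.

Lemma projective_Zm : projective Zm.
Proof.
move=> M N g h hg hh sg; exists (fun _ => 0); split.
  by move=> a u v; rewrite scaler0 addr0.
move=> x.
by rewrite (Zm0 x) (hom0 hg) (hom0 hh).
Qed.

Lemma projective_prod (A B : rmod) : projective A -> projective B -> projective (A * B)%type.
Proof.
move=> pA pB M N g h hg hh sg.
have hA : is_hom (fun a : A => h (a, 0)).
  by move=> c u v; rewrite -hh; congr h; congr pair => /=; rewrite scaler0 addr0.
have hB : is_hom (fun b : B => h (0, b)).
  by move=> c u v; rewrite -hh; congr h; congr pair => /=; rewrite scaler0 addr0.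
have [kA [hkA HA]] := pA M N g _ hg hA sg.
have [kB [hkB HB]] := pB M N g _ hg hB sg.
exists (fun x => kA x.1 + kB x.2); split.
  move=> c u v /=; rewrite hkA hkB.
  by rewrite scalerDr addrACA.
case=> a b /=; rewrite (homD hg) HA HB -(homD hh).
by congr h; congr pair; rewrite ?addr0 ?add0r.
Qed.

Unset Implicit Arguments.
Section Res.
Variables (T : rmod) (P : nat -> rmod) (d : forall n, P n.+1 -> P n) (eps : P 0 -> T).
Hypothesis hres : is_proj_resolution d eps.
Hypothesis hz : forall m, (2 < m)%N -> forall x : P m, x = 0.

Lemma res_proj n : projective (P n). Proof. by case: hres. Qed.
Lemma res_hom n : is_hom (d n). Proof. by case: hres => _ []. Qed.
Lemma res_eps_hom : is_hom eps. Proof. by case: hres => _ [_ []]. Qed.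
Lemma res_eps_surj : surj eps. Proof. by case: hres => _ [_ [_ []]]. Qed.
Lemma res_ex0 : exact_at (d 0) eps. Proof. by case: hres => _ [_ [_ [_ []]]]. Qed.
Lemma res_ex n : exact_at (d n.+1) (d n). Proof. by case: hres => _ [_ [_ [_ []]]]. Qed.

Lemma dd x : d 0 (d 1 x) = 0.
Proof. by apply/(res_ex 0); exists x. Qed.
Lemma ed x : eps (d 0 x) = 0.
Proof. by apply/res_ex0; exists x. Qed.

Definition E2 (N : rmod) := forall phi : P 2 -> N, is_hom phi ->
  exists psi : P 1 -> N, is_hom psi /\ forall x, phi x = psi (d 1 x).
Definition E1 (N : rmod) := forall phi : P 1 -> N, is_hom phi -> (forall x, phi (d 1 x) = 0) ->
  exists psi : P 0 -> N, is_hom psi /\ forall x, phi x = psi (d 0 x).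

Lemma E2_of_Ext N : Ext_succ_zero 1 T N -> E2 N.
Proof.
move=> H phi hphi; apply: (H P d eps hres phi hphi) => x.
by rewrite (hz 3 isT x) (hom0 (res_hom 2)) (hom0 hphi).
Qed.

Lemma E1_of_perp N : in_perp T N -> E1 N.
Proof. by move=> H; apply: (H P d eps hres). Qed.

Lemma E2_summand (S X : rmod) (e : X -> S) (p : S -> X) :
  is_hom e -> is_hom p -> (forall x, p (e x) = x) -> E2 S -> E2 X.
Proof.
move=> he hp pe ES phi hphi.
have [psi [hpsi H]] := ES _ (hom_comp hphi he).
exists (fun x => p (psi x)); split; first exact: hom_comp.
by move=> x; rewrite -H pe.
Qed.

Lemma E2_shift (N B C : rmod) (i : N -> B) (q : B -> C) :
  is_hom i -> is_hom q -> injective i -> surj q ->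
  (forall y, q y = 0 <-> exists n, y = i n) -> E2 B -> E1 C -> E2 N.
Proof.
move=> hi hq ii sq ex EB EC phi hphi.
have [psi [hpsi Hpsi]] := EB (fun x => i (phi x)) (hom_comp hphi hi).
have [chi [hchi Hchi]] : exists chi : P 0 -> C, is_hom chi /\ forall x, q (psi x) = chi (d 0 x).
  apply: EC; first exact: hom_comp.
  by move=> x; rewrite -Hpsi; apply/ex; exists (phi x).
have [chit [hchit Hchit]] := res_proj 0 _ _ q chi hq hchi sq.
pose rho x := psi x - chit (d 0 x).
have rhoK x : exists n, rho x = i n.
  apply/ex; rewrite /rho (homB hq) Hchit -Hchi subrr //.
pose psi' x := epsilon (inhabits 0) (fun n => rho x = i n).
have psi'K x : rho x = i (psi' x) := epsilon_spec (inhabits 0) (fun n => rho x = i n) (rhoK x).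
exists psi'; split.
  move=> a u v; apply: ii; rewrite hi -!psi'K /rho.
  rewrite (homD hpsi) (homZ hpsi) (homD (res_hom 0)) (homZ (res_hom 0)).
  rewrite (homD hchit) (homZ hchit) scalerBr opprD addrACA //.
move=> x; apply: ii; rewrite -psi'K /rho dd (hom0 hchit) subr0 -Hpsi //.
Qed.

Section Split.
Variable r : P 1 -> P 2.
Hypothesis hr : is_hom r.
Hypothesis rK : forall x, r (d 1 x) = x.

Definition P' (n : nat) : rmod :=
  match n with 0 => (P 0 * P 2)%type | 1 => P 1 | _ => Zm end.
Definition d' (n : nat) : P' n.+1 -> P' n :=
  match n as n0 return P' n0.+1 -> P' n0 with
  | 0 => fun x : P 1 => ((d 0 x, r x) : P' 0)
  | n1.+1 => fun _ => 0
  end.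
Definition eps' (x : P' 0) : T := eps x.1.

Lemma pd1 : pd_le T 1.
Proof.
exists P', d', eps'; split; last by case=> [|[|m]] //= _ x; apply: Zm0.
split; first by case=> [|[|n]] /=; [apply: projective_prod; apply: res_proj | apply: res_proj | apply: projective_Zm].
split.
  case=> [|n] /=.
    move=> a u v /=; rewrite (res_hom 0) hr //.
  by move=> a u v; rewrite scaler0 addr0.
split.
  by move=> a u v; rewrite /eps' /= res_eps_hom.
split.
  by move=> y; have [x <-] := res_eps_surj y; exists (x, 0).
split.
  case=> p q; rewrite /eps' /=; split.
    move/res_ex0 => [x ->].
    exists (x - d 1 (r x) + d 1 q) => /=.
    rewrite (homD (res_hom 0)) (homB (res_hom 0)) !dd subr0 addr0.
    by rewrite (homD hr) (homB hr) !rK subrr add0r.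
  by case=> x [-> _]; apply: ed.
case=> [|n] y /=.
  split.
    case/pair_equal_spec => /(res_ex 0) [z ->]; rewrite rK => ->.
    by exists 0; rewrite (hom0 (res_hom 1)).
  by case=> x -> /=; rewrite (hom0 (res_hom 0)) (hom0 hr).
by split => // _; exists 0; apply: Zm0.
Qed.
End Split.
End Res.


Lemma main_pd1 (T : rmod) : tilting 2 T -> (forall M, Gen T M -> in_perp T M) -> pd_le T 1.
Proof.
case=> [[P [d [eps [hres hz]]]] hext [Tm [iota [e [hiota [iinj [he [hadd [hex hlast]]]]]]]]] H.
have [I0 [S0 [inj0 [cp0 [e0' [p0 [he0' hp0 pe0]]]]]]] := hadd 0 isT.
pose K := (P 2 : choiceType).
have cpD := dsum_coprod K cp0.
have ES : E2 P d (dsum K S0) := E2_of_Ext _ P d eps hres hz _ (hext 2 isT _ _ _ cpD).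
have ET0 : E2 P d (dsum K (Tm 0)).
  apply: (E2_summand P d _ _ (@Dmap K _ _ e0') (@Dmap K _ _ p0)) ES.
  - exact: Dmap_hom.
  - exact: Dmap_hom.
  - by move=> x; apply: Dmap_retr.
have hf1 : is_hom (@Dmap K _ _ (e 1)) := Dmap_hom (he 1).
pose C := KerM hf1.
have hq0 x : @Dmap K _ _ (e 0) x \in kerP (@Dmap K _ _ (e 1)).
  rewrite inE Dmap_comp; [|exact: he|exact: he].
  apply/eqP/malgP => k; rewrite DmapE ?dsum0; last by rewrite (hom0 (he 0)) (hom0 (he 1)).
  by apply/(hex 1 isT); exists x@_k.
pose q (x : dsum K (Tm 0)) : C := KerT (hq0 x).
have kh := @kval_hom _ _ _ hf1.
have hq : is_hom q.
  move=> a u v; apply: val_inj => /=.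
  by rewrite (Dmap_hom (he 0)).
have sq : surj q.
  move=> y; have := kvalP y; rewrite inE => /eqP /(Dmap_exact (he 0) (he 1) (hex 1 isT)).
  by case=> n En; exists n; apply: val_inj => /=; rewrite -En.
have exq : forall y, q y = 0 <-> exists n, y = @Dmap K _ _ iota n.
  move=> y; rewrite -(Dmap_exact hiota (he 0) (hex 0 isT)).
  split.
    by move/(congr1 (@kval _ _ _)) => /= ->; exact: (hom0 kh).
  by move=> E; apply: val_inj => /=; rewrite E; symmetry; apply: (hom0 kh).
have genC : Gen T C.
  exists (K * I0)%type, (dsum K S0), (fun ki : K * I0 => fun t => Uk ki.1 (inj0 ki.2 t)).
  split; first exact: cpD.
  exists (fun x => q (@Dmap K _ _ p0 x)); split; first by apply: hom_comp => //; apply: Dmap_hom.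
  move=> y; have [x <-] := sq y.
  have [z <-] := Dmap_surj hp0 (fun t => ex_intro _ (e0' t) (pe0 t)) x.
  by exists z.
have EC : E1 P d C := E1_of_perp _ P d eps hres _ (H _ genC).
have ERR : E2 P d (dsum K (RR R)).
  apply: (E2_shift _ P d eps hres _ _ _ (@Dmap K _ _ iota) q) ET0 EC => //.
  - exact: Dmap_hom.
  - exact: Dmap_inj.
pose g k (c : RR R) : P 2 := (c : R^c) *: (k : P 2).
have hg k : is_hom (g k).
  by move=> a u v; rewrite /g scalerDl scalerA.
pose pi := @Dsum K _ _ g.
have hpi : is_hom pi := Dsum_hom hg.
have spi : surj pi.
  move=> y; exists (Uk y (1 : RR R)); rewrite /pi Dsum_Uk; first by rewrite /g scale1r.
  by move=> k; rewrite /g scale0r.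
have [s [hs Hs]] := res_proj _ P d eps hres 2 _ _ pi (fun x => x) hpi (@hom_id (P 2)) spi.
have E2P : E2 P d (P 2) := E2_summand P d _ _ s pi hs hpi Hs ERR.
have [r [hr Hr]] := E2P (fun x => x) (@hom_id (P 2)).
exact: (pd1 _ P d eps hres r hr (fun x => esym (Hr x))).
Qed.

Lemma hom_sub (M N : rmod) (f1 f2 : M -> N) :
  is_hom f1 -> is_hom f2 -> is_hom (fun x => f1 x - f2 x).
Proof. by move=> h1 h2 c u v; rewrite h1 h2 scalerBr opprD addrACA. Qed.

Lemma tau_gen (T : rmod) : tau_rigid T -> forall M, Gen T M -> in_perp T M.
Proof.
case=> P1 [P0 [phi [pi [_ [pP0 [hphi [hpi [spi [expi L]]]]]]]]] M genM.
move=> Q d eps hres f hf fd.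
have hd0 := res_hom _ Q d eps hres 0.
have heps := res_eps_hom _ Q d eps hres.
have seps := res_eps_surj _ Q d eps hres.
have ex0 := res_ex0 _ Q d eps hres.
have [a0 [ha0 Ha0]] := res_proj _ Q d eps hres 0 _ _ pi eps hpi heps spi.
have [b0 [hb0 Hb0]] := pP0 _ _ eps pi heps hpi seps.
pose pre z := epsilon (inhabits (0 : Q 1)) (fun x : Q 1 => z = d 0 x).
pose fbar z := f (pre z).
have fbarE x : fbar (d 0 x) = f x.
  have E : d 0 x = d 0 (pre (d 0 x)).
    exact: (epsilon_spec (inhabits (0 : Q 1)) (fun y : Q 1 => d 0 x = d 0 y) (ex_intro _ x erefl)).
  have : d 0 (pre (d 0 x) - x) = 0 by rewrite (homB hd0) -E subrr.
  case/(res_ex _ Q d eps hres 0) => w Hw.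
  have : f (pre (d 0 x) - x) = 0 by rewrite Hw fd.
  by rewrite (homB hf) => /eqP; rewrite subr_eq0 => /eqP.
have fbar_hom (A : rmod) (h : A -> Q 0) : is_hom h -> (forall y, exists x, h y = d 0 x) ->
    is_hom (fun y => fbar (h y)).
  move=> hh Hh c u v; have [xu Eu] := Hh u; have [xv Ev] := Hh v.
  by rewrite hh Eu Ev -hd0 !fbarE hf.
have imd0 z : eps z = 0 -> exists x, z = d 0 x by move/ex0.
pose F y := fbar (b0 (phi y)).
have hF : is_hom F.
  apply: fbar_hom; first exact: hom_comp.
  by move=> y; apply: imd0; rewrite Hb0; apply/expi; exists y.
have [g' [hg' Hg']] := L M genM F hF.
pose delta z := b0 (a0 z) - z.
have hdelta : is_hom delta by apply: hom_sub => //; apply: hom_comp.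
have imdelta z : exists x, delta z = d 0 x.
  by apply: imd0; rewrite /delta (homB heps) Hb0 Ha0 subrr.
exists (fun z => g' (a0 z) - fbar (delta z)); split.
  apply: hom_sub; first exact: hom_comp.
  exact: fbar_hom.
move=> x.
have [y Ey] : exists y, a0 (d 0 x) = phi y.
  by apply/expi; rewrite Ha0; apply/ex0; exists x.
rewrite /delta Ey -Hg' /F.
have [x1 E1] : exists x1, b0 (phi y) = d 0 x1.
  by apply: imd0; rewrite Hb0; apply/expi; exists y.
by rewrite E1 -(homB hd0) !fbarE (homB hf) opprB addrC subrK.
Qed.
End Basics.

Theorem corollary5p10 (R : nzRingType) (T : lmodType R^c) :
  tilting 2 T -> ~ pd_le T 1 ->
  ~ (forall M : lmodType R^c, Gen T M -> in_perp T M) /\ ~ tau_rigid T.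
Proof.
move=> ht hpd.
have A : ~ (forall M : lmodType R^c, Gen T M -> in_perp T M).
  by move=> H; apply: hpd; apply: main_pd1.
by split => // /tau_gen.
Qed.
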